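(* Let $\mathcal{A}$ be a finite set, $u,v\in\Delta(\mathcal{A})$ probability vectors, and $r:\mathcal{A}\to\mathbb{R}$ a reward function. Consider a preference model $\mathbb{P}_r(y=1|a,a')\in[0,1]$ satisfying $\mathbb{P}_r(y=1|a,a')\ge\frac12$ for all $a,a'\in\mathcal{A}$ with $r(a)\ge r(a')$. Then $$\sum_{a\in\mathcal{A}}\sqrt{u(a)v(a)}\le\min_{\gamma>0}\sqrt{\big(\gamma+2\mathbb{P}_r(v\succ u)\big)\log\frac{1+\gamma}{\gamma}},$$ where $\mathbb{P}_r(v\succ u):=\mathbb{E}_{a\sim v,a'\sim u}[\mathbb{P}_r(y=1|a,a')]$. *)

(* Defs.v *)
From HB Require Import structures.
From mathcomp Require Import all_boot all_order all_algebra.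
From mathcomp Require Import reals exp.
Set Implicit Arguments. Unset Strict Implicit. Unset Printing Implicit Defensive.
Import Order.TTheory GRing.Theory Num.Theory.
Local Open Scope ring_scope.

Definition is_prob_vec (R : realType) (A : finType) (p : A -> R) : Prop :=
  (forall a, 0 <= p a) /\ \sum_(a : A) p a = 1.

Definition pref_prob (R : realType) (A : finType) (Pref : A -> A -> R)
  (v u : A -> R) : R :=
  \sum_(a : A) \sum_(a' : A) v a * u a' * Pref a a'.

(* Main.v *)
Require Import Defs.
From HB Require Import structures.
From mathcomp Require Import all_boot all_order all_algebra reals exp.
From mathcomp Require Import ring lra.
Import Order.TTheory GRing.Theory Num.Theory.
Local Open Scope ring_scope.

Lemma key (R : realType) (x y : R) : 0 <= x -> 0 < y -> x / (x + y) <= ln (x + y) - ln y.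
Proof.
move=> x0 y0.
have xy : 0 < x + y by lra.
have h : y / (x + y) = 1 + (- (x / (x + y))) by field; lra.
have hx : -1 < - (x / (x + y)).
  rewrite ltrNl opprK ltr_pdivrMr // mul1r; lra.
have := le_ln1Dx hx; rewrite -h ln_div ?posrE //; lra.
Qed.

Section S.
Variables (R : realType) (A : finType) (u r : A -> R) (g : R).
Hypothesis u0 : forall a, 0 <= u a.
Hypothesis g0 : 0 < g.
Definition US (S : {set A}) a := \sum_(a' in S | r a' <= r a) u a'.

Lemma US_ge0 S a : 0 <= US S a.
Proof. by apply: sumr_ge0 => i _. Qed.

Lemma tele (S : {set A}) :
  \sum_(a in S) u a / (g + US S a) <= ln (g + \sum_(a in S) u a) - ln g.
Proof.
have [n] := ubnP #|S|; elim: n S => [|n IH] S //.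
case: (set_0Vmem S) => [->|[k0 k0S]] hn.
  by rewrite !big_set0 addr0 subrr.
case: (@arg_maxP _ R A k0 (mem S) r k0S) => k kS0 kmax.
have kS : k \in S := kS0.
have hU : US S k = \sum_(a in S) u a.
  by rewrite /US; apply: eq_bigl => i; case iS: (i \in S) => //=; exact: kmax.
rewrite (bigD1 k kS) /= [X in _ <= ln (g + X) - _](bigD1 k kS) /= hU.
have hS' : (#|S :\ k| < n)%N.
  by move: hn; rewrite (cardsD1 k S) kS add1n ltnS.
have IH' := IH (S :\ k) hS'.
have e : forall F : A -> R, \sum_(i in S | i != k) F i = \sum_(i in S :\ k) F i.
  by move=> F; apply: eq_bigl => i; rewrite !inE andbC.
rewrite !e.
have hsub : forall i, US (S :\ k) i <= US S i.
  move=> i; rewrite /US big_mkcond [X in _ <= X]big_mkcond /=; apply: ler_sum => a _; rewrite !inE.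
  by case: (a \in S); case: (a == k); case: (r a <= r i) => //=.
have hle : \sum_(i in S :\ k) u i / (g + US S i) <= \sum_(i in S :\ k) u i / (g + US (S :\ k) i).
  apply: ler_sum => i _; apply: ler_wpM2l => //.
  rewrite lef_pV2 ?posrE ?lerD2l ?hsub //.
    by apply: ltr_wpDr; [exact: US_ge0|].
  by apply: ltr_wpDr; [exact: US_ge0|].
have M0 : 0 <= \sum_(i in S :\ k) u i by apply: sumr_ge0.
have := @key R (u k) (g + \sum_(i in S :\ k) u i) (u0 k).
move: hle IH'.
rewrite (bigD1 k kS) /= e.
set M := \sum_(i in S :\ k) u i.
set X := \sum_(i in S :\ k) u i / (g + US S i).
set Y := \sum_(i in S :\ k) u i / (g + US (S :\ k) i).
move=> hle IH' K.
have -> : g + (u k + M) = u k + (g + M) by ring.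
have gM : 0 < g + M by apply: ltr_wpDr.
have := K gM. move: hle IH'. clear. move=> *. lra.
Qed.
End S.
Lemma amgm (R : realType) (s p w : R) : 0 <= s -> 0 <= p -> 0 <= w -> p * w = s ^+ 2 -> 2 * s <= p + w.
Proof.
move=> s0 p0 w0 h.
rewrite -(@ler_pXn2r _ 2) // ?nnegrE; last 2 first.
- by apply: mulr_ge0.
- by apply: addr_ge0.
have : 0 <= (p - w) ^+ 2 by apply: sqr_ge0.
rewrite !expr2 in h *; nra.
Qed.

Theorem lemmaG1 (R : realType) (A : finType) (u v : A -> R) (r : A -> R)
  (Pref : A -> A -> R)
  (hu : is_prob_vec u) (hv : is_prob_vec v)
  (hP01 : forall a a', 0 <= Pref a a' <= 1)
  (hPr : forall a a', r a' <= r a -> 1 / 2 <= Pref a a') :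
  forall gamma : R, 0 < gamma ->
    \sum_(a : A) Num.sqrt (u a * v a)
      <= Num.sqrt ((gamma + 2 * pref_prob Pref v u) * ln ((1 + gamma) / gamma)).
Proof.
move=> g g0.
case: hu => u0 u1; case: hv => v0 v1.
pose U a := US R A u r [set: A] a.
have U0 : forall a, 0 <= U a by move=> a; apply: US_ge0.
have c0 : forall a, 0 < g + U a by move=> a; apply: ltr_wpDr.
pose Q := \sum_a v a * U a.
pose Y := \sum_a u a / (g + U a).
set B := \sum_a Num.sqrt (u a * v a).
have B0 : 0 <= B by apply: sumr_ge0 => a _; apply: sqrtr_ge0.
have Q0 : 0 <= Q by apply: sumr_ge0 => a _; apply: mulr_ge0.
have Y0 : 0 <= Y.
  by apply: sumr_ge0 => a _; apply: divr_ge0 => //; apply: ltW.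
have YL : Y <= ln ((1 + g) / g).
  have := @tele R A u r g u0 g0 [set: A].
  have e : forall F : A -> R, \sum_(a in [set: A]) F a = \sum_a F a.
    by move=> F; apply: eq_bigl => a; rewrite in_setT.
  rewrite !e u1 ln_div ?posrE //; last by apply: addr_gt0.
  by rewrite [1 + g]addrC.
have QP : Q <= 2 * pref_prob Pref v u.
  rewrite /Q /pref_prob mulr_sumr; apply: ler_sum => a _.
  rewrite /U /US big_mkcond mulr_sumr mulr_sumr; apply: ler_sum => a' _.
  rewrite in_setT /=.
  have /andP [p0 p1] := hP01 a a'.
  have va := v0 a; have ua := u0 a'.
  have vu : 0 <= v a * u a' by apply: mulr_ge0.
  case: ifP => h.
    have hp := hPr _ _ h.
    rewrite mulrA; nra.
  rewrite mulr0; apply: mulr_ge0 => //; apply: mulr_ge0 => //.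
have AM : forall l, 0 < l -> 2 * B <= l * (g + Q) + l^-1 * Y.
  move=> l l0.
  have -> : g + Q = \sum_a v a * (g + U a).
    rewrite /Q; apply/esym; under eq_bigr => a _ do rewrite mulrDr.
    by rewrite big_split /= -mulr_suml v1 mul1r.
  rewrite /B /Y !mulr_sumr -big_split /=; apply: ler_sum => a _.
  apply: amgm.
  - exact: sqrtr_ge0.
  - by apply: mulr_ge0; [apply: ltW|apply: mulr_ge0 => //; apply: ltW].
  - apply: mulr_ge0; first by rewrite invr_ge0 ltW.
    by apply: divr_ge0 => //; apply: ltW.
  - rewrite sqr_sqrtr; last by apply: mulr_ge0.
    have := c0 a; move=> ca.
    field; apply/andP; split; apply: lt0r_neq0 => //.
have BXY : B ^+ 2 <= (g + Q) * Y.
  have X0 : 0 < g + Q by apply: ltr_wpDr.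
  have [B0'|Bpos] := eqVneq B 0.
    by rewrite B0' expr0n /=; apply: mulr_ge0 => //; apply: ltW.
  have Bp : 0 < B by rewrite lt0r Bpos.
  have := AM (B / (g + Q)) (divr_gt0 Bp X0).
  have -> : B / (g + Q) * (g + Q) = B by field; apply: lt0r_neq0.
  have -> : (B / (g + Q))^-1 * Y = (g + Q) * Y / B.
    by field; apply/andP; split; apply: lt0r_neq0.
  move=> h.
  have h2 : B <= (g + Q) * Y / B by lra.
  by rewrite expr2 -ler_pdivlMr.
rewrite -(ger0_norm B0) -sqrtr_sqr; apply: ler_wsqrtr.
apply: (le_trans BXY); apply: ler_pM => //.
- by apply: addr_ge0 => //; apply: ltW.
- by rewrite lerD2l.
Qed.
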